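(* Let $K$ be a Kleene algebra and $x,u,v\in K$. If the inequation $y\ge (x+uyv)^*$ has a least solution $N$ in $K$, then \[ (u+x+v)^*=(Nv)^*N(uN)^*. \]
   Context: A Kleene algebra is an idempotent semiring $(K,+,\cdot,0,1)$ with a unary operation $^*$ such that for all $a,b$: $aa^*+1\le a^*$, $a^*a+1\le a^*$, and for all $x$, $ax+b\le x$ implies $a^*b\le x$, and $xa+b\le x$ implies $ba^*\le x$; here $a\le b$ iff $a+b=b$. No $*$-continuity is assumed. *)

(* Defs.v *)
Set Implicit Arguments.

Record KleeneAlgebra := {
  ka_car :> Type;
  ka_add : ka_car -> ka_car -> ka_car;
  ka_mul : ka_car -> ka_car -> ka_car;
  ka_zero : ka_car;
  ka_one : ka_car;
  ka_star : ka_car -> ka_car;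
  ka_addA : forall a b c, ka_add a (ka_add b c) = ka_add (ka_add a b) c;
  ka_addC : forall a b, ka_add a b = ka_add b a;
  ka_add0 : forall a, ka_add a ka_zero = a;
  ka_addI : forall a, ka_add a a = a;
  ka_mulA : forall a b c, ka_mul a (ka_mul b c) = ka_mul (ka_mul a b) c;
  ka_mul1l : forall a, ka_mul ka_one a = a;
  ka_mul1r : forall a, ka_mul a ka_one = a;
  ka_mulDl : forall a b c, ka_mul (ka_add a b) c = ka_add (ka_mul a c) (ka_mul b c);
  ka_mulDr : forall a b c, ka_mul a (ka_add b c) = ka_add (ka_mul a b) (ka_mul a c);
  ka_mul0l : forall a, ka_mul ka_zero a = ka_zero;
  ka_mul0r : forall a, ka_mul a ka_zero = ka_zero;
  (* star axioms, with a <= b iff a + b = b *)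
  ka_star_unfoldl : forall a,
    ka_add (ka_add (ka_mul a (ka_star a)) ka_one) (ka_star a) = ka_star a;
  ka_star_unfoldr : forall a,
    ka_add (ka_add (ka_mul (ka_star a) a) ka_one) (ka_star a) = ka_star a;
  ka_star_indl : forall a b x,
    ka_add (ka_add (ka_mul a x) b) x = x ->
    ka_add (ka_mul (ka_star a) b) x = x;
  ka_star_indr : forall a b x,
    ka_add (ka_add (ka_mul x a) b) x = x ->
    ka_add (ka_mul b (ka_star a)) x = x
}.

Arguments ka_add {k}.
Arguments ka_mul {k}.
Arguments ka_star {k}.

Definition ka_le (K : KleeneAlgebra) (a b : K) : Prop := ka_add a b = b.
Arguments ka_le {K}.

Definition least_solution {K : KleeneAlgebra} (x u v N : K) : Prop :=
  ka_le (ka_star (ka_add x (ka_mul u (ka_mul N v)))) N /\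
  forall y : K, ka_le (ka_star (ka_add x (ka_mul u (ka_mul y v)))) y -> ka_le N y.

(* Main.v *)
Require Import Defs.
From Stdlib Require Import Setoid.

Local Notation "a ⊕ b" := (ka_add a b) (at level 50, left associativity).
Local Notation "a ⊗ b" := (ka_mul a b) (at level 40, left associativity).
Local Notation "a ≦ b" := (ka_le a b) (at level 70).
Local Notation "1" := (ka_one _).

Section L.
Context {K : KleeneAlgebra}.
Implicit Types a b c d e : K.

Lemma le_refl a : a ≦ a. Proof. apply ka_addI. Qed.
Lemma le_trans a b c : a ≦ b -> b ≦ c -> a ≦ c.
Proof. unfold ka_le; intros H1 H2. rewrite <- H2, ka_addA, H1. reflexivity. Qed.
Lemma le_antisym a b : a ≦ b -> b ≦ a -> a = b.
Proof. unfold ka_le; intros H1 H2. rewrite <- H1, <- H2 at 1. apply ka_addC. Qed.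
Lemma lub a b c : a ≦ c -> b ≦ c -> a ⊕ b ≦ c.
Proof. unfold ka_le; intros H1 H2. rewrite <- ka_addA, H2, H1. reflexivity. Qed.
Lemma le_addl a b : a ≦ a ⊕ b.
Proof. unfold ka_le. rewrite ka_addA, ka_addI. reflexivity. Qed.
Lemma le_addr a b : b ≦ a ⊕ b.
Proof. rewrite ka_addC. apply le_addl. Qed.
Lemma split_l a b c : a ⊕ b ≦ c -> a ≦ c.
Proof. intros; eapply le_trans; [apply le_addl|eauto]. Qed.
Lemma split_r a b c : a ⊕ b ≦ c -> b ≦ c.
Proof. intros; eapply le_trans; [apply le_addr|eauto]. Qed.
Lemma add_mono a b c d : a ≦ b -> c ≦ d -> a ⊕ c ≦ b ⊕ d.
Proof. intros. apply lub; eapply le_trans; eauto using le_addl, le_addr. Qed.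
Lemma mul_monol a b c : a ≦ b -> c ⊗ a ≦ c ⊗ b.
Proof. unfold ka_le; intros H. rewrite <- ka_mulDr, H. reflexivity. Qed.
Lemma mul_monor a b c : a ≦ b -> a ⊗ c ≦ b ⊗ c.
Proof. unfold ka_le; intros H. rewrite <- ka_mulDl, H. reflexivity. Qed.
Lemma mul_mono a b c d : a ≦ b -> c ≦ d -> a ⊗ c ≦ b ⊗ d.
Proof. intros; eapply le_trans; [apply mul_monor|apply mul_monol]; eauto. Qed.

Lemma star_unl a : a ⊗ ka_star a ≦ ka_star a.
Proof. eapply split_l; apply ka_star_unfoldl. Qed.
Lemma star_1 a : 1 ≦ ka_star a.
Proof. eapply split_r; apply ka_star_unfoldl. Qed.
Lemma star_unr a : ka_star a ⊗ a ≦ ka_star a.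
Proof. eapply split_l; apply ka_star_unfoldr. Qed.
Lemma star_ge a : a ≦ ka_star a.
Proof. rewrite <- (ka_mul1r _ a) at 1. eapply le_trans; [apply mul_monol, star_1|apply star_unl]. Qed.
Lemma indl a b c : a ⊗ c ⊕ b ≦ c -> ka_star a ⊗ b ≦ c.
Proof. apply ka_star_indl. Qed.
Lemma indr a b c : c ⊗ a ⊕ b ≦ c -> b ⊗ ka_star a ≦ c.
Proof. apply ka_star_indr. Qed.
Lemma star_le a S : a ≦ S -> 1 ≦ S -> S ⊗ S ≦ S -> ka_star a ≦ S.
Proof.
  intros H1 H2 H3. rewrite <- (ka_mul1r _ (ka_star a)). apply indl.
  apply lub; auto. eapply le_trans; [apply mul_monor, H1|exact H3].
Qed.
Lemma star_idem a : ka_star a ⊗ ka_star a ≦ ka_star a.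
Proof. apply indl. apply lub. apply star_unl. apply le_refl. Qed.
Lemma star_mono a b : a ≦ b -> ka_star a ≦ ka_star b.
Proof.
  intros H. apply star_le. eapply le_trans; [exact H|apply star_ge]. apply star_1.
  apply star_idem.
Qed.
Lemma le_m1r a c : 1 ≦ c -> a ≦ a ⊗ c.
Proof. intros H. eapply le_trans; [|apply mul_monol, H]. rewrite ka_mul1r. apply le_refl. Qed.
Lemma le_m1l a c : 1 ≦ c -> a ≦ c ⊗ a.
Proof. intros H. eapply le_trans; [|apply mul_monor, H]. rewrite ka_mul1l. apply le_refl. Qed.
End L.

Theorem theorem6 (K : KleeneAlgebra) (x u v N : K) :
  least_solution x u v N ->
  ka_star (ka_add (ka_add u x) v) =
  ka_mul (ka_star (ka_mul N v)) (ka_mul N (ka_star (ka_mul u N))).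
Proof.
  intros [H1 H2].
  set (M := ka_star (x ⊕ u ⊗ (N ⊗ v))) in *.
  assert (EN : N = M).
  { apply le_antisym; [|exact H1]. apply H2.
    apply star_mono. apply add_mono. apply le_refl. apply mul_monol, mul_monor, H1. }
  assert (N1 : 1 ≦ N) by (rewrite EN; apply star_1).
  assert (NN : N ⊗ N ≦ N) by (rewrite EN; apply star_idem).
  assert (Ha : x ⊕ u ⊗ (N ⊗ v) ≦ N) by (pose proof (star_ge (x ⊕ u ⊗ (N ⊗ v))) as Hg; change (x ⊕ u ⊗ (N ⊗ v) ≦ M) in Hg; rewrite <- EN in Hg; exact Hg).
  assert (Nx : x ≦ N) by exact (split_l _ _ _ Ha).
  assert (Nuv : u ⊗ (N ⊗ v) ≦ N) by exact (split_r _ _ _ Ha).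
  clearbody M. clear EN.
  set (S := ka_star (u ⊕ x ⊕ v)).
  assert (Sa : u ⊕ x ⊕ v ≦ S) by apply star_ge.
  assert (Su : u ≦ S) by exact (split_l _ _ _ (split_l _ _ _ Sa)).
  assert (Sx : x ≦ S) by exact (split_r _ _ _ (split_l _ _ _ Sa)).
  assert (Sv : v ≦ S) by exact (split_r _ _ _ Sa).
  assert (S1 : 1 ≦ S) by apply star_1.
  assert (SS : S ⊗ S ≦ S) by apply star_idem.
  assert (S3 : forall a b c, a ≦ S -> b ≦ S -> c ≦ S -> a ⊗ (b ⊗ c) ≦ S).
  { intros a b c Ha' Hb Hc. eapply le_trans; [apply mul_mono; [exact Ha'|apply mul_mono; [exact Hb|exact Hc]]|].
    eapply le_trans; [apply mul_monol, SS|exact SS]. }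
  assert (NS : N ≦ S).
  { apply H2. apply star_le; auto. apply lub; auto. apply S3; auto.
    apply le_refl. }
  set (P := ka_star (N ⊗ v)). set (Q := ka_star (u ⊗ N)).
  assert (P1 : 1 ≦ P) by apply star_1.
  assert (Q1 : 1 ≦ Q) by apply star_1.
  apply le_antisym.
  -
    rewrite <- (ka_mul1r _ S). unfold S. apply indl.
    assert (SL : N ⊗ P ≦ P ⊗ N).
    { apply indr. apply lub.
      - rewrite <- !ka_mulA. eapply le_trans.
        + apply mul_monol. rewrite ka_mulA. apply mul_monor, NN.
        + eapply le_trans; [apply star_unr|].
          apply le_m1r, N1.
      - apply le_m1l, P1. }
    assert (NR : N ⊗ (P ⊗ (N ⊗ Q)) ≦ P ⊗ (N ⊗ Q)).
    { rewrite ka_mulA. eapply le_trans; [apply mul_monor, SL|].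
      rewrite <- ka_mulA. apply mul_monol. rewrite ka_mulA. apply mul_monor, NN. }
    assert (R1 : 1 ≦ P ⊗ (N ⊗ Q)).
    { eapply le_trans; [apply P1|]. apply le_m1r. eapply le_trans; [apply N1|]. apply le_m1r, Q1. }
    assert (QR : Q ≦ P ⊗ (N ⊗ Q)).
    { eapply le_trans; [|apply le_m1l, P1]. apply le_m1l, N1. }
    rewrite !ka_mulDl. apply lub; [apply lub; [apply lub|]|exact R1].
    +
      assert (UP : u ⊗ P ≦ u ⊕ N ⊗ P).
      { apply indr. apply lub; [|apply le_addl]. rewrite ka_mulDl. apply lub.
        - eapply le_trans; [exact Nuv|]. eapply le_trans; [|apply le_addr].
          apply le_m1r, P1.
        - eapply le_trans; [|apply le_addr]. rewrite <- ka_mulA. apply mul_monol, star_unr. }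
      rewrite ka_mulA. eapply le_trans; [apply mul_monor, UP|]. rewrite ka_mulDl. apply lub.
      * rewrite ka_mulA. eapply le_trans; [|exact QR]. apply star_unl.
      * rewrite <- ka_mulA. exact NR.
    + eapply le_trans; [apply mul_monor, Nx|exact NR].
    + rewrite ka_mulA. apply mul_monor. eapply le_trans; [|apply star_unl].
      apply mul_monor. apply le_m1l, N1.
  - apply S3; auto.
    + apply star_le; auto. eapply le_trans; [apply mul_mono; eauto|exact SS].
    + apply star_le; auto. eapply le_trans; [apply mul_mono; eauto|exact SS].
Qed.
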